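(* Let $X$ be a proper metric space, $Y$ a metric space, and $F\colon X\to Y$ an $L$-Lipschitz quotient mapping. Let $\gamma\colon[0,T]\to Y$ be a $1$-Lipschitz curve with $\gamma(0)=F(x)$ for some $x\in X$. Then there is an $L$-Lipschitz curve $\tilde\gamma\colon[0,T]\to X$ with $\tilde\gamma(0)=x$ and $F\circ\tilde\gamma=\gamma$.
   Context: A metric space is proper if closed balls are compact. $F\colon X\to Y$ is an $L$-Lipschitz quotient ($L$-LQ) mapping, $L\ge1$, if $B(F(x),r/L)\subseteq F(B(x,r))\subseteq B(F(x),Lr)$ for all $x\in X$, $r>0$, where $B$ denotes open balls. *)

(* Defs.v *)
From Stdlib Require Import Reals Lra List.
Open Scope R_scope.

Record MetricSpace : Type := {
  mcarrier :> Type;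
  mdist : mcarrier -> mcarrier -> R;
  mdist_nonneg : forall x y, 0 <= mdist x y;
  mdist_eq0 : forall x y, mdist x y = 0 <-> x = y;
  mdist_sym : forall x y, mdist x y = mdist y x;
  mdist_tri : forall x y z, mdist x z <= mdist x y + mdist y z
}.

Arguments mdist {m} _ _.

Definition ball {X : MetricSpace} (x : X) (r : R) (y : X) : Prop := mdist x y < r.
Definition cball {X : MetricSpace} (x : X) (r : R) (y : X) : Prop := mdist x y <= r.

Definition is_open {X : MetricSpace} (U : X -> Prop) : Prop :=
  forall x, U x -> exists r, 0 < r /\ forall y, ball x r y -> U y.

Definition compact {X : MetricSpace} (K : X -> Prop) : Prop :=
  forall (I : Type) (U : I -> X -> Prop),
    (forall i, is_open (U i)) ->
    (forall x, K x -> exists i, U i x) ->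
    exists l : list I, forall x, K x -> exists i, In i l /\ U i x.

Definition proper (X : MetricSpace) : Prop :=
  forall (x : X) (r : R), compact (cball x r).

Definition image {X Y : Type} (F : X -> Y) (A : X -> Prop) (y : Y) : Prop :=
  exists x, A x /\ F x = y.

Definition subset {X : Type} (A B : X -> Prop) : Prop := forall x, A x -> B x.

Definition LQ_map {X Y : MetricSpace} (L : R) (F : X -> Y) : Prop :=
  1 <= L /\
  forall (x : X) (r : R), 0 < r ->
    subset (ball (F x) (r / L)) (image F (ball x r)) /\
    subset (image F (ball x r)) (ball (F x) (L * r)).

(* a curve [0,T] -> X (represented as a function on R, only values on [0,T] matter)
   which is K-Lipschitz on [0,T] *)
Definition lipschitz_on_interval {X : MetricSpace} (K T : R) (g : R -> X) : Prop :=
  forall s t, 0 <= s <= T -> 0 <= t <= T -> mdist (g s) (g t) <= K * Rabs (s - t).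

(* Main.v *)
Require Import Defs.
From Stdlib Require Import Reals Lra Lia List Cantor ClassicalEpsilon Classical.
Open Scope R_scope.

Lemma ball_open (X : MetricSpace) (p : X) (r : R) : is_open (ball p r).
Proof.
  intros y Hy. unfold ball in *. exists (r - mdist p y). split; [lra|].
  intros z Hz. pose proof (mdist_tri X p y z). lra.
Qed.

Lemma cluster (X : MetricSpace) (K : X -> Prop) (A Q : Type) (u : A -> X)
  (S : Q -> A -> Prop) :
  Defs.compact K ->
  (forall l : list Q, exists a, (forall q, In q l -> S q a) /\ K (u a)) ->
  exists p, forall e q, 0 < e -> exists a, S q a /\ mdist (u a) p < e.
Proof.
  intros HK Hfin. apply NNPP. intro Hn.
  assert (Hp : forall p : X, exists eq : R * Q, 0 < fst eq /\
      forall a, S (snd eq) a -> fst eq <= mdist (u a) p).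
  { intro p. apply NNPP. intro Hc. apply Hn. exists p. intros e q He.
    apply NNPP. intro Hc2. apply Hc. exists (e, q). simpl. split; auto.
    intros a Ha. apply Rnot_lt_le. intro Hl. apply Hc2. exists a; auto. }
  set (E := fun p => proj1_sig (constructive_indefinite_description _ (Hp p))).
  assert (HE : forall p, 0 < fst (E p) /\ forall a, S (snd (E p)) a -> fst (E p) <= mdist (u a) p).
  { intro p. exact (proj2_sig (constructive_indefinite_description _ (Hp p))). }
  destruct (HK X (fun p => ball p (fst (E p)))) as [l Hl].
  - intro i. apply ball_open.
  - intros y _. exists y. unfold ball. rewrite (proj2 (mdist_eq0 X y y) eq_refl).
    apply HE.
  - destruct (Hfin (map (fun p => snd (E p)) l)) as [a [Ha1 Ha2]].
    destruct (Hl _ Ha2) as [p [Hpl Hpb]].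
    assert (Hs : S (snd (E p)) a). { apply Ha1. apply (in_map (fun p => snd (E p))). exact Hpl. }
    pose proof (proj2 (HE p) a Hs). unfold ball in Hpb.
    rewrite mdist_sym in Hpb. lra.
Qed.

Lemma LQ_lip (X Y : MetricSpace) (L : R) (F : X -> Y) :
  LQ_map L F -> forall a b : X, mdist (F a) (F b) <= L * mdist a b.
Proof.
  intros [HL HQ] a b. apply Rnot_lt_le. intro Hlt.
  set (D := mdist (F a) (F b)). set (d := mdist a b). fold D d in Hlt.
  pose proof (mdist_nonneg X a b) as Hd. fold d in Hd.
  assert (HDL : d < D / L).
  { apply (Rmult_lt_reg_l L); [lra|]. field_simplify; lra. }
  set (r := (D / L + d) / 2).
  assert (Hr : d < r) by (unfold r; lra).
  assert (HLr : L * r = (D + L * d) / 2) by (unfold r; field; lra).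
  destruct (HQ a r ltac:(lra)) as [_ H2].
  assert (Hb : image F (ball a r) (F b)) by (exists b; split; [exact Hr|reflexivity]).
  specialize (H2 _ Hb). unfold ball in H2. fold D in H2. lra.
Qed.

Lemma le_eps (a b : R) : (forall M : nat, a <= b + / (INR M + 1)) -> a <= b.
Proof.
  intro H. apply Rnot_lt_le. intro Hlt.
  destruct (INR_archimed 1 (/ (a - b))) as [M HM]; [lra|].
  specialize (H M). rewrite Rmult_1_r in HM.
  assert (0 < INR M) by (pose proof (Rinv_0_lt_compat (a-b)); lra).
  assert (/ (INR M + 1) < a - b).
  { rewrite <- (Rinv_inv (a - b)). apply Rinv_lt_contravar.
    - apply Rmult_lt_0_compat; [apply Rinv_0_lt_compat|]; lra.
    - lra. }
  lra.
Qed.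

Lemma INR_lt_pow2 (n : nat) : INR n < 2 ^ n.
Proof.
  induction n. simpl; lra.
  rewrite S_INR. simpl. assert (1 <= 2 ^ n) by (apply pow_R1_Rle; lra). lra.
Qed.

Lemma grid_floor (h t : R) (N : nat) : 0 < h -> 0 <= t ->
  exists i, (i <= N)%nat /\ INR i * h <= t /\ (t < INR (S i) * h \/ i = N).
Proof.
  intros Hh Ht. induction N.
  - exists 0%nat. simpl. split; [lia|]. split; [lra|]. right; reflexivity.
  - destruct IHN as [i [Hi [H1 [H2|H2]]]].
    + exists i. split; [lia|split; auto].
    + subst i. destruct (Rlt_le_dec t (INR (S N) * h)).
      * exists N. split; [lia|split; auto].
      * exists (S N). split; [lia|]. split; [exact r|right; reflexivity].
Qed.

Record Data := { dX : MetricSpace; dY : MetricSpace; dL : R; dF : dX -> dY;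
  dT : R; dg : R -> dY; dx : dX }.

Definition Good (D : Data) : Prop :=
  proper (dX D) /\ LQ_map (dL D) (dF D) /\ 0 < dT D /\
  lipschitz_on_interval 1 (dT D) (dg D) /\ dg D 0 = dF D (dx D).

Definition hh (T : R) (n : nat) : R := T / 2 ^ n.
Definition cc (L T : R) (n : nat) : R := L * hh T n * (1 + / (INR n + 1)).

Lemma INR_pow2 (n : nat) : INR (2 ^ n)%nat = 2 ^ n.
Proof. rewrite pow_INR. replace (INR 2) with 2 by (simpl; lra). reflexivity. Qed.

Lemma pow2_pos (n : nat) : 0 < 2 ^ n.
Proof. apply pow_lt; lra. Qed.

Lemma hh_pos T n : 0 < T -> 0 < hh T n.
Proof. intro. unfold hh. apply Rdiv_lt_0_compat; auto. apply pow2_pos. Qed.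

Lemma inv_le1 n : 0 < / (INR n + 1) <= 1.
Proof.
  pose proof (pos_INR n). split. apply Rinv_0_lt_compat; lra.
  rewrite <- Rinv_1. apply Rinv_le_contravar; lra.
Qed.

Lemma cc_pos L T n : 1 <= L -> 0 < T -> 0 < cc L T n.
Proof.
  intros. unfold cc. pose proof (hh_pos T n H0). pose proof (inv_le1 n).
  apply Rmult_lt_0_compat; [apply Rmult_lt_0_compat|]; lra.
Qed.

Lemma ex_next (D : Data) (n : nat) (a : dX D) (i : nat) :
  exists z : dX D, Good D -> dF D a = dg D (INR i * hh (dT D) n) ->
    INR (S i) * hh (dT D) n <= dT D ->
    dF D z = dg D (INR (S i) * hh (dT D) n) /\ mdist a z < cc (dL D) (dT D) n.
Proof.
  destruct (classic (Good D /\ dF D a = dg D (INR i * hh (dT D) n) /\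
    INR (S i) * hh (dT D) n <= dT D)) as [[HG [Ha Hi]]|Hn].
  - destruct HG as [Hp [[HL HQ] [HT [Hg H0]]]].
    pose proof (hh_pos _ n HT) as Hh. pose proof (inv_le1 n) as Hinv.
    destruct (HQ a (cc (dL D) (dT D) n) (cc_pos _ _ n HL HT)) as [H1 _].
    assert (Hb : ball (dF D a) (cc (dL D) (dT D) n / dL D) (dg D (INR (S i) * hh (dT D) n))).
    { unfold ball. rewrite Ha.
      pose proof (pos_INR i). rewrite S_INR in *.
      assert (Hd := Hg (INR i * hh (dT D) n) ((INR i + 1) * hh (dT D) n)).
      assert (0 <= INR i * hh (dT D) n) by (apply Rmult_le_pos; lra).
      assert (INR i * hh (dT D) n <= dT D) by (rewrite Rmult_plus_distr_r in Hi; lra).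
      rewrite Rmult_1_l in Hd.
      specialize (Hd ltac:(lra) ltac:(rewrite Rmult_plus_distr_r in Hi |- *; lra)).
      replace (INR i * hh (dT D) n - (INR i + 1) * hh (dT D) n) with (- hh (dT D) n) in Hd by ring.
      rewrite Rabs_Ropp, Rabs_pos_eq in Hd by lra.
      replace (cc (dL D) (dT D) n / dL D) with (hh (dT D) n * (1 + / (INR n + 1))).
      2:{ unfold cc. field. pose proof (pos_INR n). repeat split; lra. }
      nra. }
    destruct (H1 _ Hb) as [z [Hz1 Hz2]]. exists z. intros. split; auto.
  - exists a. intros HG Ha Hi. exfalso. apply Hn. auto.
Qed.

Definition next (D : Data) (n : nat) (a : dX D) (i : nat) : dX D :=
  proj1_sig (constructive_indefinite_description _ (ex_next D n a i)).

Fixpoint G (D : Data) (n : nat) (i : nat) : dX D :=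
  match i with 0%nat => dx D | S i => next D n (G D n i) i end.

Lemma hh_pow T n : hh T n * 2 ^ n = T.
Proof. unfold hh. field. apply Rgt_not_eq, pow2_pos. Qed.

Lemma Ginv (D : Data) n i : Good D -> (i <= 2 ^ n)%nat ->
  dF D (G D n i) = dg D (INR i * hh (dT D) n).
Proof.
  intros HG. induction i; intro Hi.
  - simpl. rewrite Rmult_0_l. symmetry. apply HG.
  - simpl. unfold next.
    destruct (constructive_indefinite_description _ (ex_next D n (G D n i) i)) as [z Hz]. simpl.
    apply Hz; auto. apply IHi; lia.
    apply le_INR in Hi. rewrite INR_pow2 in Hi.
    pose proof (hh_pow (dT D) n). pose proof (hh_pos (dT D) n (proj1 (proj2 (proj2 HG)))).
    nra.
Qed.

Lemma Gstep (D : Data) n i : Good D -> (S i <= 2 ^ n)%nat ->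
  mdist (G D n i) (G D n (S i)) < cc (dL D) (dT D) n.
Proof.
  intros HG Hi. simpl. unfold next.
  destruct (constructive_indefinite_description _ (ex_next D n (G D n i) i)) as [z Hz]. simpl.
  apply Hz; auto. apply Ginv; auto; lia.
  apply le_INR in Hi. rewrite INR_pow2 in Hi.
  pose proof (hh_pow (dT D) n). pose proof (hh_pos (dT D) n (proj1 (proj2 (proj2 HG)))).
  nra.
Qed.

Lemma mdist_self (X : MetricSpace) (a : X) : mdist a a = 0.
Proof. apply mdist_eq0. reflexivity. Qed.

Lemma Glip (D : Data) n a b : Good D -> (a <= b)%nat -> (b <= 2 ^ n)%nat ->
  mdist (G D n a) (G D n b) <= cc (dL D) (dT D) n * INR (b - a).
Proof.
  intros HG. revert a. induction b; intros a Hab Hb.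
  - assert (a = 0%nat) by lia. subst. rewrite mdist_self. simpl. lra.
  - destruct (Nat.eq_dec a (S b)) as [->|Hne].
    + rewrite mdist_self, Nat.sub_diag. simpl. lra.
    + pose proof (IHb a ltac:(lia) ltac:(lia)).
      pose proof (Gstep D n b HG Hb).
      pose proof (mdist_tri _ (G D n a) (G D n b) (G D n (S b))).
      replace (S b - a)%nat with (S (b - a)) by lia. rewrite S_INR. lra.
Qed.

Lemma Glip_abs (D : Data) n a b : Good D -> (a <= 2 ^ n)%nat -> (b <= 2 ^ n)%nat ->
  mdist (G D n a) (G D n b) <= cc (dL D) (dT D) n * Rabs (INR a - INR b).
Proof.
  intros HG Ha Hb. destruct (Compare_dec.le_lt_dec a b) as [Hab|Hab].
  - rewrite Rabs_minus_sym, Rabs_pos_eq. rewrite <- minus_INR by auto. apply Glip; auto.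
    apply le_INR in Hab. lra.
  - rewrite mdist_sym, Rabs_pos_eq. rewrite <- minus_INR by lia. apply Glip; auto; lia.
    apply lt_INR in Hab. lra.
Qed.

Lemma Gbound (D : Data) n i : Good D -> (i <= 2 ^ n)%nat ->
  mdist (dx D) (G D n i) <= 2 * dL D * dT D.
Proof.
  intros HG Hi. pose proof (Glip D n 0 i HG ltac:(lia) Hi) as H. simpl G in H.
  rewrite Nat.sub_0_r in H. eapply Rle_trans; [exact H|].
  destruct HG as [_ [[HL _] [HT _]]].
  apply le_INR in Hi. rewrite INR_pow2 in Hi.
  pose proof (hh_pow (dT D) n). pose proof (hh_pos (dT D) n HT). pose proof (inv_le1 n).
  pose proof (cc_pos _ _ n HL HT).
  apply Rle_trans with (cc (dL D) (dT D) n * 2 ^ n). apply Rmult_le_compat_l; lra.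
  unfold cc. replace (dL D * hh (dT D) n * (1 + / (INR n + 1)) * 2 ^ n)
   with (dL D * (1 + / (INR n + 1)) * (hh (dT D) n * 2 ^ n)) by ring.
  rewrite hh_pow. assert (0 <= dL D * dT D) by nra.
  replace (dL D * (1 + / (INR n + 1)) * dT D) with (dL D * dT D + / (INR n + 1) * (dL D * dT D)) by ring.
  nra.
Qed.

Definition qm (j : nat) : nat := fst (Cantor.of_nat j).
Definition qi (j : nat) : nat := Nat.min (snd (Cantor.of_nat j)) (2 ^ qm j).
Definition q (D : Data) (j : nat) : R := INR (qi j) * hh (dT D) (qm j).
Definition idx (n j : nat) : nat := (qi j * 2 ^ (n - qm j))%nat.
Definition val (D : Data) (n j : nat) : dX D := G D n (idx n j).

Lemma idx_le n j : (qm j <= n)%nat -> (idx n j <= 2 ^ n)%nat.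
Proof.
  intro H. unfold idx. replace (2 ^ n)%nat with (2 ^ qm j * 2 ^ (n - qm j))%nat.
  apply Nat.mul_le_mono_r. unfold qi. lia.
  rewrite <- Nat.pow_add_r. f_equal. lia.
Qed.

Lemma idx_q (D : Data) n j : (qm j <= n)%nat -> INR (idx n j) * hh (dT D) n = q D j.
Proof.
  intro H. unfold idx, q, hh. rewrite mult_INR, INR_pow2.
  assert (E : (2:R) ^ n = 2 ^ (n - qm j) * 2 ^ qm j) by (rewrite <- pow_add; f_equal; lia).
  rewrite E. field. split; apply Rgt_not_eq, pow2_pos.
Qed.

Lemma q_range (D : Data) j : 0 < dT D -> 0 <= q D j <= dT D.
Proof.
  intro HT. unfold q. pose proof (hh_pos _ (qm j) HT). pose proof (pos_INR (qi j)).
  split. apply Rmult_le_pos; lra.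
  assert (Hq : (qi j <= 2 ^ qm j)%nat) by (unfold qi; lia).
  apply le_INR in Hq. rewrite INR_pow2 in Hq. pose proof (hh_pow (dT D) (qm j)). nra.
Qed.

Definition Pk (D : Data) (k : nat) (h : nat -> dX D) : Prop :=
  forall M : nat, exists n, (M <= n)%nat /\
    forall j, (j < k)%nat -> mdist (val D n j) (h j) < / (INR M + 1).

Definition ext (D : Data) (h : nat -> dX D) (k : nat) (p : dX D) : nat -> dX D :=
  fun j => if Nat.eqb j k then p else h j.

Fixpoint lmax (l : list nat) : nat := match l with nil => 0%nat | a :: l => Nat.max a (lmax l) end.

Lemma lmax_in l a : In a l -> (a <= lmax l)%nat.
Proof. induction l; simpl. tauto. intros [H0|H0]. subst; lia. specialize (IHl H0). lia. Qed.

Lemma inv_mono (a b : nat) : (a <= b)%nat -> / (INR b + 1) <= / (INR a + 1).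
Proof.
  intro H. apply le_INR in H. pose proof (pos_INR a).
  apply Rinv_le_contravar; lra.
Qed.

Lemma ex_pick (D : Data) (k : nat) (h : nat -> dX D) :
  exists p, Good D -> Pk D k h -> Pk D (S k) (ext D h k p).
Proof.
  destruct (classic (Good D /\ Pk D k h)) as [[HG HP]|Hn].
  2:{ exists (dx D). intros; exfalso; auto. }
  destruct (cluster (dX D) (cball (dx D) (2 * dL D * dT D)) nat nat (fun n => val D n k)
    (fun M n => (M <= n)%nat /\ (qm k <= n)%nat /\
       forall j, (j < k)%nat -> mdist (val D n j) (h j) < / (INR M + 1))) as [p Hp].
  - apply (proj1 HG).
  - intro l. destruct (HP (Nat.max (qm k) (lmax l))) as [n [Hn Hc]].
    exists n. split.
    + intros q0 Hq0. pose proof (lmax_in l q0 Hq0). split; [lia|]. split; [lia|].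
      intros j Hj. eapply Rlt_le_trans. apply Hc; auto. apply inv_mono. lia.
    + unfold cball, val. apply Gbound; auto. apply idx_le. lia.
  - exists p. intros _ _ M. destruct (Hp (/ (INR M + 1)) M (proj1 (inv_le1 M))) as [n [[H1 [H2 H3]] H4]].
    exists n. split; auto. intros j Hj. unfold ext.
    destruct (Nat.eqb_spec j k). subst; auto. apply H3; lia.
Qed.

Definition pick (D : Data) k h : dX D :=
  proj1_sig (constructive_indefinite_description _ (ex_pick D k h)).

Fixpoint Hseq (D : Data) (k : nat) : nat -> dX D :=
  match k with 0%nat => fun _ => dx D | S k => ext D (Hseq D k) k (pick D k (Hseq D k)) end.

Lemma Pk_H (D : Data) k : Good D -> Pk D k (Hseq D k).
Proof.
  intro HG. induction k.
  - intro M. exists M. split; [lia|]. intros; lia.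
  - simpl. unfold pick.
    destruct (constructive_indefinite_description _ (ex_pick D k (Hseq D k))) as [p Hp].
    simpl. auto.
Qed.

Definition gd (D : Data) (j : nat) : dX D := Hseq D (S j) j.

Lemma H_stable (D : Data) k j : (j < k)%nat -> Hseq D k j = gd D j.
Proof.
  induction k; intro Hj. lia.
  simpl. unfold ext. destruct (Nat.eqb_spec j k).
  - subst. unfold gd. simpl. unfold ext. rewrite Nat.eqb_refl. reflexivity.
  - apply IHk. lia.
Qed.

Lemma Pk_g (D : Data) k M : Good D -> exists n, (M <= n)%nat /\
    forall j, (j < k)%nat -> mdist (val D n j) (gd D j) < / (INR M + 1).
Proof.
  intro HG. destruct (Pk_H D k HG M) as [n [Hn Hc]]. exists n. split; auto.
  intros j Hj. rewrite <- (H_stable D k j Hj). auto.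
Qed.

Lemma le_epsC (a b C : R) : 0 <= C -> (forall M : nat, a <= b + C * / (INR M + 1)) -> a <= b.
Proof.
  intros HC Hm. apply Rnot_lt_le. intro Hlt.
  destruct (INR_archimed 1 (C / (a - b))) as [M HM]; [lra|].
  specialize (Hm M). rewrite Rmult_1_r in HM. pose proof (pos_INR M).
  assert (C < (a - b) * INR M).
  { apply (Rmult_lt_compat_l (a - b)) in HM; [|lra].
    replace ((a - b) * (C / (a - b))) with C in HM by (field; lra). lra. }
  assert (C * / (INR M + 1) < a - b).
  { apply (Rmult_lt_reg_r (INR M + 1)); [lra|].
    replace (C * / (INR M + 1) * (INR M + 1)) with C by (field; lra). nra. }
  lra.
Qed.

Lemma gd_lip (D : Data) j k : Good D ->
  mdist (gd D j) (gd D k) <= dL D * Rabs (q D j - q D k).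
Proof.
  intro HG. pose proof HG as [_ [[HL _] [HT _]]].
  set (Dl := Rabs (q D j - q D k)). assert (0 <= Dl) by apply Rabs_pos.
  apply (le_epsC _ _ (2 + dL D * Dl)); [nra|]. intro M.
  destruct (Pk_g D (S (Nat.max j k)) (Nat.max M (Nat.max (qm j) (qm k))) HG) as [n [Hn Hc]].
  pose proof (Hc j ltac:(lia)) as Hj. pose proof (Hc k ltac:(lia)) as Hk.
  pose proof (inv_mono M (Nat.max M (Nat.max (qm j) (qm k))) ltac:(lia)) as I1.
  pose proof (inv_mono M n ltac:(lia)) as I2.
  pose proof (Glip_abs D n (idx n j) (idx n k) HG (idx_le n j ltac:(lia)) (idx_le n k ltac:(lia))) as Hjk.
  fold (val D n j) (val D n k) in Hjk.
  assert (E : cc (dL D) (dT D) n * Rabs (INR (idx n j) - INR (idx n k)) =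
              dL D * (1 + / (INR n + 1)) * Dl).
  { unfold Dl. rewrite <- (idx_q D n j), <- (idx_q D n k) by lia.
    rewrite <- Rmult_minus_distr_r, Rabs_mult, (Rabs_pos_eq (hh _ _)).
    unfold cc. ring. apply Rlt_le, hh_pos; auto. }
  rewrite E in Hjk.
  pose proof (mdist_tri _ (gd D j) (val D n j) (gd D k)).
  pose proof (mdist_tri _ (val D n j) (val D n k) (gd D k)).
  rewrite mdist_sym in Hj.
  assert (dL D * / (INR n + 1) * Dl <= dL D * Dl * / (INR M + 1)).
  { replace (dL D * Dl * / (INR M + 1)) with (dL D * / (INR M + 1) * Dl) by ring.
    apply Rmult_le_compat_r; auto. apply Rmult_le_compat_l; lra. }
  nra.
Qed.

Lemma gd_F (D : Data) j : Good D -> dF D (gd D j) = dg D (q D j).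
Proof.
  intro HG. pose proof HG as [_ [HLQ [HT _]]]. pose proof (proj1 HLQ) as HL.
  apply mdist_eq0. apply Rle_antisym; [|apply mdist_nonneg].
  apply (le_epsC _ _ (dL D)); [lra|]. intro M. rewrite Rplus_0_l.
  destruct (Pk_g D (S j) (Nat.max M (qm j)) HG) as [n [Hn Hc]].
  pose proof (Hc j ltac:(lia)) as Hj.
  pose proof (inv_mono M (Nat.max M (qm j)) ltac:(lia)) as I1.
  assert (Hv : dF D (val D n j) = dg D (q D j)).
  { unfold val. rewrite Ginv; auto. rewrite idx_q; auto; lia. apply idx_le; lia. }
  rewrite <- Hv. rewrite mdist_sym. eapply Rle_trans. apply (LQ_lip _ _ _ _ HLQ).
  apply Rmult_le_compat_l; lra.
Qed.

Definition j0 : nat := Cantor.to_nat (0, 0)%nat.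

Lemma q_j0 (D : Data) : q D j0 = 0.
Proof. unfold q, qi, qm, j0. rewrite Cantor.cancel_of_to. simpl. lra. Qed.

Lemma gd_j0 (D : Data) : Good D -> gd D j0 = dx D.
Proof.
  intro HG. symmetry. apply mdist_eq0. apply Rle_antisym; [|apply mdist_nonneg].
  apply (le_epsC _ _ 1); [lra|]. intro M.
  destruct (Pk_g D (S j0) M HG) as [n [Hn Hc]].
  pose proof (Hc j0 ltac:(lia)) as Hj.
  assert (Hv : val D n j0 = dx D).
  { unfold val, idx, qi, qm, j0. rewrite Cantor.cancel_of_to. reflexivity. }
  rewrite Hv in Hj. lra.
Qed.

Lemma gd_bound (D : Data) j : Good D -> mdist (dx D) (gd D j) <= dL D * dT D.
Proof.
  intro HG. rewrite <- (gd_j0 D HG). eapply Rle_trans. apply gd_lip; auto.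
  rewrite q_j0. pose proof (q_range D j (proj1 (proj2 (proj2 HG)))).
  rewrite Rminus_0_l, Rabs_Ropp, Rabs_pos_eq by lra.
  pose proof (proj1 (proj1 (proj2 HG))). apply Rmult_le_compat_l; lra.
Qed.

Lemma density (D : Data) t d : Good D -> 0 <= t <= dT D -> 0 < d ->
  exists j, Rabs (q D j - t) < d.
Proof.
  intros HG Ht Hd. pose proof (proj1 (proj2 (proj2 HG))) as HT.
  destruct (INR_archimed 1 (dT D / d)) as [m Hm]; [lra|]. rewrite Rmult_1_r in Hm.
  pose proof (INR_lt_pow2 m).
  assert (Hh : hh (dT D) m < d).
  { unfold hh. apply (Rmult_lt_reg_r (2 ^ m)); [apply pow2_pos|].
    replace (dT D / 2 ^ m * 2 ^ m) with (dT D) by (field; apply Rgt_not_eq, pow2_pos).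
    apply (Rmult_lt_compat_l d) in Hm; [|lra].
    replace (d * (dT D / d)) with (dT D) in Hm by (field; lra). nra. }
  destruct (grid_floor (hh (dT D) m) t (2 ^ m) (hh_pos _ m HT) (proj1 Ht)) as [i [Hi [H1 H2]]].
  exists (Cantor.to_nat (m, i)).
  unfold q, qi, qm. rewrite Cantor.cancel_of_to. simpl.
  rewrite Nat.min_l by auto.
  destruct H2 as [H2|H2].
  - rewrite S_INR in H2. rewrite Rabs_minus_sym, Rabs_pos_eq; lra.
  - subst i. rewrite INR_pow2 in *. rewrite Rmult_comm, hh_pow in *.
    replace (dT D - t) with 0 by lra.
    rewrite Rabs_R0. lra.
Qed.

Lemma ex_gt (D : Data) (t : R) : exists p : dX D, Good D -> 0 <= t <= dT D ->
  forall e M, 0 < e -> exists j, Rabs (q D j - t) < / (INR M + 1) /\ mdist (gd D j) p < e.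
Proof.
  destruct (classic (Good D /\ 0 <= t <= dT D)) as [[HG Ht]|Hn].
  2:{ exists (dx D). intros; exfalso; auto. }
  destruct (cluster (dX D) (cball (dx D) (dL D * dT D)) nat nat (gd D)
    (fun M j => Rabs (q D j - t) < / (INR M + 1))) as [p Hp].
  - apply (proj1 HG).
  - intro l. destruct (density D t (/ (INR (lmax l) + 1)) HG Ht (proj1 (inv_le1 _))) as [j Hj].
    exists j. split.
    + intros q0 Hq0. eapply Rlt_le_trans; [exact Hj|]. apply inv_mono. apply lmax_in; auto.
    + apply gd_bound; auto.
  - exists p. intros _ _ e M He. apply Hp; auto.
Qed.

Definition gt (D : Data) (t : R) : dX D :=
  proj1_sig (constructive_indefinite_description _ (ex_gt D t)).

Lemma gt_spec (D : Data) t : Good D -> 0 <= t <= dT D ->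
  forall e M, 0 < e -> exists j, Rabs (q D j - t) < / (INR M + 1) /\ mdist (gd D j) (gt D t) < e.
Proof.
  unfold gt. destruct (constructive_indefinite_description _ (ex_gt D t)) as [p Hp]. exact Hp.
Qed.

Lemma gt_lip (D : Data) : Good D -> lipschitz_on_interval (dL D) (dT D) (gt D).
Proof.
  intros HG s t Hs Ht. pose proof (proj1 (proj1 (proj2 HG))) as HL.
  apply (le_epsC _ _ (2 + 2 * dL D)); [lra|]. intro M.
  pose proof (inv_le1 M) as Hi.
  destruct (gt_spec D s HG Hs (/ (INR M + 1)) M (proj1 Hi)) as [j [Hj1 Hj2]].
  destruct (gt_spec D t HG Ht (/ (INR M + 1)) M (proj1 Hi)) as [k [Hk1 Hk2]].
  pose proof (gd_lip D j k HG).
  pose proof (mdist_tri _ (gt D s) (gd D j) (gt D t)).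
  pose proof (mdist_tri _ (gd D j) (gd D k) (gt D t)).
  rewrite mdist_sym in Hj2.
  assert (Rabs (q D j - q D k) <= Rabs (s - t) + 2 * / (INR M + 1)).
  { replace (q D j - q D k) with ((q D j - s) + (s - t) + (t - q D k)) by ring.
    eapply Rle_trans. apply Rabs_triang. eapply Rle_trans.
    apply Rplus_le_compat_r. apply Rabs_triang. rewrite (Rabs_minus_sym t). lra. }
  assert (dL D * Rabs (q D j - q D k) <= dL D * (Rabs (s - t) + 2 * / (INR M + 1)))
    by (apply Rmult_le_compat_l; lra).
  lra.
Qed.

Lemma gt_0 (D : Data) : Good D -> gt D 0 = dx D.
Proof.
  intro HG. pose proof (proj1 (proj1 (proj2 HG))) as HL. pose proof (proj1 (proj2 (proj2 HG))) as HT.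
  apply mdist_eq0. apply Rle_antisym; [|apply mdist_nonneg].
  apply (le_epsC _ _ (1 + dL D)); [lra|]. intro M. rewrite Rplus_0_l.
  pose proof (inv_le1 M) as Hi.
  destruct (gt_spec D 0 HG ltac:(lra) (/ (INR M + 1)) M (proj1 Hi)) as [j [Hj1 Hj2]].
  pose proof (gd_lip D j0 j HG). rewrite q_j0, (gd_j0 D HG) in H.
  rewrite Rminus_0_r in Hj1. rewrite Rminus_0_l, Rabs_Ropp in H.
  pose proof (mdist_tri _ (gt D 0) (gd D j) (dx D)).
  pose proof (mdist_sym _ (gt D 0) (gd D j)). pose proof (mdist_sym _ (gd D j) (dx D)).
  assert (dL D * Rabs (q D j) <= dL D * / (INR M + 1)) by (apply Rmult_le_compat_l; lra).
  lra.
Qed.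

Lemma gt_F (D : Data) t : Good D -> 0 <= t <= dT D -> dF D (gt D t) = dg D t.
Proof.
  intros HG Ht. pose proof HG as [_ [HLQ [HT [Hg _]]]]. pose proof (proj1 HLQ) as HL.
  apply mdist_eq0. apply Rle_antisym; [|apply mdist_nonneg].
  apply (le_epsC _ _ (1 + dL D)); [lra|]. intro M. rewrite Rplus_0_l.
  pose proof (inv_le1 M) as Hi.
  destruct (gt_spec D t HG Ht (/ (INR M + 1)) M (proj1 Hi)) as [j [Hj1 Hj2]].
  pose proof (mdist_tri _ (dF D (gt D t)) (dF D (gd D j)) (dg D t)).
  rewrite (gd_F D j HG) in H.
  pose proof (LQ_lip _ _ _ _ HLQ (gt D t) (gd D j)). rewrite (gd_F D j HG) in H0.
  pose proof (Hg (q D j) t (q_range D j HT) Ht). rewrite Rmult_1_l in H1.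
  rewrite mdist_sym in Hj2.
  assert (dL D * mdist (gt D t) (gd D j) <= dL D * / (INR M + 1)) by (apply Rmult_le_compat_l; lra).
  lra.
Qed.
Theorem lemma3p3 (X Y : MetricSpace) (L : R) (F : X -> Y) (T : R)
  (gamma : R -> Y) (x : X) :
  proper X ->
  LQ_map L F ->
  0 <= T ->
  lipschitz_on_interval 1 T gamma ->
  gamma 0 = F x ->
  exists gt : R -> X,
    lipschitz_on_interval L T gt /\ gt 0 = x /\
    (forall t, 0 <= t <= T -> F (gt t) = gamma t).
Proof.
  intros Hp HLQ HT Hg H0.
  destruct (Req_dec T 0) as [->|HT'].
  - exists (fun _ => x). split; [|split; auto].
    + intros s t _ _. rewrite mdist_self. pose proof (proj1 HLQ).
      pose proof (Rabs_pos (s - t)). nra.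
    + intros t Ht. replace t with 0 by lra. auto.
  - set (D := {| dX := X; dY := Y; dL := L; dF := F; dT := T; dg := gamma; dx := x |}).
    assert (HG : Good D) by (unfold Good; simpl; split; [exact Hp|split; [exact HLQ|split; [lra|split; [exact Hg|exact H0]]]]).
    exists (gt D). split; [|split].
    + exact (gt_lip D HG).
    + exact (gt_0 D HG).
    + intros t Ht. exact (gt_F D t HG Ht).
Qed.
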